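(* For any function $g=g(\mathbf{x}_p)\in C^1(\mathbb{R}^{p+1},\mathbb{A})$ (depending only on $\mathbf{x}_p$) and any $k\in\mathbb{N}$: $$D_{\mathbf{x}_p}(\underline{\mathbf{x}}_q^{2k}g)=\underline{\mathbf{x}}_q^{2k}(D_{\mathbf{x}_p}g),\qquad D_{\mathbf{x}_p}(\underline{\mathbf{x}}_q^{2k+1}g)=\underline{\mathbf{x}}_q^{2k+1}(\overline{D}_{\mathbf{x}_p}g),$$ $$D_{\underline{\mathbf{x}}_q}(\underline{\mathbf{x}}_q^{2k}g)=-2k\,\underline{\mathbf{x}}_q^{2k-1}g,\qquad D_{\underline{\mathbf{x}}_q}(\underline{\mathbf{x}}_q^{2k+1}g)=-(2k+q)\,\underline{\mathbf{x}}_q^{2k}g.$$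
   Context: Let $\mathbb{A}$ be a real alternative algebra (the associator $[a,b,c]=(ab)c-a(bc)$ is an alternating trilinear function) with unity $1$, of finite real dimension $d>1$, equipped with an anti-involution $a\mapsto a^c$ (real linear, $a^c=a$ for real $a$, $(a^c)^c=a$, $(ab)^c=b^ca^c$). Let $t(x)=x+x^c$, $n(x)=xx^c$, $\mathbb{S}_{\mathbb{A}}=\{x: t(x)=0,\ n(x)=1\}$ (assumed nonempty) and $Q_{\mathbb{A}}=\mathbb{R}\cup\{x: t(x)\in\mathbb{R},\ n(x)\in\mathbb{R},\ 4n(x)>t(x)^2\}$. Let $M$ be a real subspace with $\mathbb{R}\subsetneq M\subseteq Q_{\mathbb{A}}$ having a basis $(v_0,\dots,v_m)$, $m\ge1$, $v_0=1$, $v_s\in\mathbb{S}_{\mathbb{A}}$, $v_sv_t=-v_tv_s$ for distinct $s,t\ge1$. Identify $x=\sum x_sv_s\in M$ with $(x_0,\dots,x_m)\in\mathbb{R}^{m+1}$; differentiate componentwise. Fix $p\in\{0,\dots,m-1\}$, $q=m-p$; $\mathbf{x}=\mathbf{x}_p+\underline{\mathbf{x}}_q$ with $\mathbf{x}_p=\sum_{s=0}^px_sv_s\in\mathbb{R}^{p+1}$, $\underline{\mathbf{x}}_q=\sum_{s=p+1}^m x_sv_s$; powers $\underline{\mathbf{x}}_q^j$ are taken in $\mathbb{A}$ (the term with $k=0$ in the third identity is $0$). $D_{\mathbf{x}_p}f=\sum_{s=0}^p v_s\partial_{x_s}f$, $\overline{D}_{\mathbf{x}_p}f=\partial_{x_0}f-\sum_{s=1}^pv_s\partial_{x_s}f$,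 $D_{\underline{\mathbf{x}}_q}f=\sum_{s=p+1}^mv_s\partial_{x_s}f$ (all acting on the left). *)

(* Defs.v *)
From mathcomp Require Import all_boot all_order all_algebra.
From mathcomp Require Import all_classical all_reals all_analysis.
Import GRing.Theory Num.Theory numFieldNormedType.Exports.
Set Implicit Arguments. Unset Strict Implicit. Unset Printing Implicit Defensive.
Local Open Scope ring_scope.

(* The algebra A of real dimension d is represented in coordinates as 'rV[R]_d
   (so it carries its natural normed-space structure for differentiation);
   mulA is the (non-associative) product, e the unity, conj the anti-involution. *)
Section AltAlg.
Context {R : realType} {d : nat}.
Local Notation A := 'rV[R]_d.
Variables (mulA : A -> A -> A) (e : A) (conj : A -> A).

Definition associator (a b c : A) : A := mulA (mulA a b) c - mulA a (mulA b c).

Record is_alt_alg_with_anti_involution : Prop := {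
  mulA_linear_l : forall (c : A) (r : R) (a b : A),
      mulA (r *: a + b) c = r *: mulA a c + mulA b c;
  mulA_linear_r : forall (a : A) (r : R) (b c : A),
      mulA a (r *: b + c) = r *: mulA a b + mulA a c;
  mul1A : forall a, mulA e a = a;
  mulA1 : forall a, mulA a e = a;
  associator_aab : forall a b, associator a a b = 0;
  associator_aba : forall a b, associator a b a = 0;
  associator_abb : forall a b, associator a b b = 0;
  conj_linear : forall (r : R) (a b : A), conj (r *: a + b) = r *: conj a + conj b;
  conj_real : forall r : R, conj (r *: e) = r *: e;
  conjK : forall a, conj (conj a) = a;
  conj_mul : forall a b, conj (mulA a b) = mulA (conj b) (conj a) }.

Definition is_realA (x : A) : Prop := exists r : R, x = r *: e.
Definition tA (x : A) : A := x + conj x.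
Definition nA (x : A) : A := mulA x (conj x).
Definition in_SA (x : A) : Prop := tA x = 0 /\ nA x = e.
Definition in_QA (x : A) : Prop :=
  is_realA x \/
  exists t n : R, tA x = t *: e /\ nA x = n *: e /\ t ^+ 2 < 4 * n.

(* powers: x^0 = 1, x^(j+1) = x x^j (A is power-associative) *)
Definition powA (x : A) (j : nat) : A := iter j (mulA x) e.

(* (v_0,...,v_m) is a basis of a real subspace M with R ⊊ M ⊆ Q_A,
   v_0 = 1, v_s ∈ S_A and v_s v_t = - v_t v_s for distinct s,t >= 1;
   M is the span of the v_s. *)
Record adapted_basis (m : nat) (v : 'I_m.+1 -> A) : Prop := {
  basis_v0 : v ord0 = e;
  basis_free : forall c : 'rV[R]_m.+1,
      \sum_(s < m.+1) c ord0 s *: v s = 0 -> c = 0;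
  basis_in_QA : forall c : 'rV[R]_m.+1, in_QA (\sum_(s < m.+1) c ord0 s *: v s);
  basis_in_SA : forall s : 'I_m.+1, (0 < s)%N -> in_SA (v s);
  basis_anticomm : forall s t : 'I_m.+1, (0 < s)%N -> (0 < t)%N -> s != t ->
      mulA (v s) (v t) = - mulA (v t) (v s) }.

Definition partial (n : nat) (F : 'rV[R]_n -> A) (s : 'I_n) (x : 'rV[R]_n) : A :=
  'D_(delta_mx ord0 s) F x.

Definition C1 (n : nat) (F : 'rV[R]_n -> A) : Prop :=
  (forall (s : 'I_n) (x : 'rV[R]_n), derivable F x (delta_mx ord0 s)) /\
  (forall s : 'I_n, continuous (partial F s)).

Variables (m p : nat) (v : 'I_m.+1 -> A).

Definition xp_of (x : 'rV[R]_m.+1) : 'rV[R]_p.+1 := \row_(i < p.+1) x ord0 (inord i).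
Definition xq_of (x : 'rV[R]_m.+1) : A := \sum_(s < m.+1 | (p < s)%N) x ord0 s *: v s.

Definition D_xp (F : 'rV[R]_m.+1 -> A) (x : 'rV[R]_m.+1) : A :=
  \sum_(s < m.+1 | (s <= p)%N) mulA (v s) (partial F s x).
Definition D_xq (F : 'rV[R]_m.+1 -> A) (x : 'rV[R]_m.+1) : A :=
  \sum_(s < m.+1 | (p < s)%N) mulA (v s) (partial F s x).

Definition D_xp_g (g : 'rV[R]_p.+1 -> A) (y : 'rV[R]_p.+1) : A :=
  \sum_(s < p.+1) mulA (v (inord s)) (partial g s y).
Definition Dbar_xp_g (g : 'rV[R]_p.+1 -> A) (y : 'rV[R]_p.+1) : A :=
  partial g ord0 y - \sum_(s < p.+1 | (0 < s)%N) mulA (v (inord s)) (partial g s y).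

End AltAlg.

(* Main.v *)
Require Import Defs.
From mathcomp Require Import all_boot all_order all_algebra.
From mathcomp Require Import all_classical all_reals all_analysis.
From mathcomp Require Import ring.
Import GRing.Theory Num.Theory numFieldNormedType.Exports.
Local Open Scope ring_scope.
Set Implicit Arguments. Unset Strict Implicit.


Lemma mADl (R : realType) d (mulA : 'rV[R]_d -> _ -> _) e conj
  (H : is_alt_alg_with_anti_involution mulA e conj) (a b c : 'rV[R]_d) :
  mulA (a + b) c = mulA a c + mulA b c.
Proof. by have := mulA_linear_l H c 1 a b; rewrite !scale1r. Qed.

Lemma mADr (R : realType) d (mulA : 'rV[R]_d -> _ -> _) e conj
  (H : is_alt_alg_with_anti_involution mulA e conj) (a b c : 'rV[R]_d) :
  mulA a (b + c) = mulA a b + mulA a c.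
Proof. by have := mulA_linear_r H a 1 b c; rewrite !scale1r. Qed.

Lemma m0l (R : realType) d (mulA : 'rV[R]_d -> _ -> _) e conj
  (H : is_alt_alg_with_anti_involution mulA e conj) c :
  mulA 0 c = 0.
Proof. by have := mADl H 0 0 c; rewrite addr0 -{1}[mulA 0 c]addr0 => /addrI <-. Qed.

Lemma m0r (R : realType) d (mulA : 'rV[R]_d -> _ -> _) e conj
  (H : is_alt_alg_with_anti_involution mulA e conj) c :
  mulA c 0 = 0.
Proof. by have := mADr H c 0 0; rewrite addr0 -{1}[mulA c 0]addr0 => /addrI <-. Qed.

Lemma mZl (R : realType) d (mulA : 'rV[R]_d -> _ -> _) e conj
  (H : is_alt_alg_with_anti_involution mulA e conj) r a c :
  mulA (r *: a) c = r *: mulA a c.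
Proof. by have := mulA_linear_l H c r a 0; rewrite !addr0 (m0l H) addr0. Qed.

Lemma mZr (R : realType) d (mulA : 'rV[R]_d -> _ -> _) e conj
  (H : is_alt_alg_with_anti_involution mulA e conj) r a c :
  mulA a (r *: c) = r *: mulA a c.
Proof. by have := mulA_linear_r H a r c 0; rewrite !addr0 (m0r H) addr0. Qed.

Lemma mNl (R : realType) d (mulA : 'rV[R]_d -> _ -> _) e conj
  (H : is_alt_alg_with_anti_involution mulA e conj) a c :
  mulA (- a) c = - mulA a c.
Proof. by rewrite -scaleN1r (mZl H) scaleN1r. Qed.

Lemma mNr (R : realType) d (mulA : 'rV[R]_d -> _ -> _) e conj
  (H : is_alt_alg_with_anti_involution mulA e conj) a c :
  mulA a (- c) = - mulA a c.
Proof. by rewrite -scaleN1r (mZr H) scaleN1r. Qed.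

Lemma msuml (R : realType) d (mulA : 'rV[R]_d -> _ -> _) e conj
  (H : is_alt_alg_with_anti_involution mulA e conj) I (r : seq I) (P : pred I) F c :
  mulA (\sum_(i <- r | P i) F i) c = \sum_(i <- r | P i) mulA (F i) c.
Proof. exact: (big_morph _ (fun a b => mADl H a b c) (m0l H c)). Qed.

Lemma msumr (R : realType) d (mulA : 'rV[R]_d -> _ -> _) e conj
  (H : is_alt_alg_with_anti_involution mulA e conj) I (r : seq I) (P : pred I) F c :
  mulA c (\sum_(i <- r | P i) F i) = \sum_(i <- r | P i) mulA c (F i).
Proof. exact: (big_morph _ (mADr H c) (m0r H c)). Qed.


Lemma assocDl (R : realType) d (mulA : 'rV[R]_d -> _ -> _) e conj
  (H : is_alt_alg_with_anti_involution mulA e conj) (a b c w : 'rV[R]_d) :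
  associator mulA (a + b) c w = associator mulA a c w + associator mulA b c w.
Proof. rewrite /associator !(mADl H). rewrite (opprD (mulA a (mulA c w))). by rewrite addrACA. Qed.

Lemma assocDm (R : realType) d (mulA : 'rV[R]_d -> _ -> _) e conj
  (H : is_alt_alg_with_anti_involution mulA e conj) (a b c w : 'rV[R]_d) :
  associator mulA c (a + b) w = associator mulA c a w + associator mulA c b w.
Proof. by rewrite /associator !(mADl H) !(mADr H) !(mADl H) opprD addrACA. Qed.

Lemma assoc_anti (R : realType) d (mulA : 'rV[R]_d -> _ -> _) e conj
  (H : is_alt_alg_with_anti_involution mulA e conj) (a b w : 'rV[R]_d) :
  associator mulA a b w = - associator mulA b a w.
Proof.
have := associator_aab H (a + b) w.
rewrite (assocDl H) !(assocDm H) !(associator_aab H) add0r addr0.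
by move/eqP; rewrite addr_eq0 => /eqP.
Qed.

Lemma vvw_anti (R : realType) d (mulA : 'rV[R]_d -> _ -> _) e conj
  (H : is_alt_alg_with_anti_involution mulA e conj) (a b w : 'rV[R]_d) :
  mulA a b = - mulA b a ->
  mulA a (mulA b w) = - mulA b (mulA a w).
Proof.
move=> ab.
have := assoc_anti H a b w; rewrite /associator ab (mNl H).
move/eqP; rewrite -subr_eq0 opprK addrACA addNr add0r -opprD oppr_eq0 addr_eq0.
by move/eqP.
Qed.


Definition cq (R : realType) (m p : nat) (x : 'rV[R]_m.+1) : R :=
  - \sum_(t < m.+1 | (p < t)%N) x ord0 t ^+ 2.

Lemma vsq (R : realType) d (mulA : 'rV[R]_d -> _ -> _) e conj m
  (v : 'I_m.+1 -> 'rV[R]_d)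
  (H : is_alt_alg_with_anti_involution mulA e conj)
  (Hb : adapted_basis mulA e conj v) (s : 'I_m.+1) :
  (0 < s)%N -> mulA (v s) (v s) = - e.
Proof.
move=> s0; have [Ht Hn] := basis_in_SA Hb s0.
move: Ht; rewrite /tA => /eqP; rewrite addrC addr_eq0 => /eqP Ht.
by move: Hn; rewrite /nA Ht (mNr H) => <-; rewrite opprK.
Qed.

Lemma vvw (R : realType) d (mulA : 'rV[R]_d -> _ -> _) e conj m
  (v : 'I_m.+1 -> 'rV[R]_d)
  (H : is_alt_alg_with_anti_involution mulA e conj)
  (Hb : adapted_basis mulA e conj v) (s : 'I_m.+1) w :
  (0 < s)%N -> mulA (v s) (mulA (v s) w) = - w.
Proof.
move=> s0; have := associator_aab H (v s) w.
rewrite /associator (vsq H Hb s0) (mNl H) (Defs.mul1A H).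
by move/eqP; rewrite subr_eq0 => /eqP ->.
Qed.

Lemma QQ (R : realType) d (mulA : 'rV[R]_d -> _ -> _) e conj m p
  (v : 'I_m.+1 -> 'rV[R]_d)
  (H : is_alt_alg_with_anti_involution mulA e conj)
  (Hb : adapted_basis mulA e conj v) (x : 'rV[R]_m.+1) :
  mulA (xq_of p v x) (xq_of p v x) = cq p x *: e.
Proof.
rewrite /xq_of (msuml H).
pose f (s t : 'I_m.+1) := (x ord0 s * x ord0 t) *: mulA (v s) (v t).
have -> : \sum_(i < m.+1 | (p < i)%N) mulA (x ord0 i *: v i)
      (\sum_(s < m.+1 | (p < s)%N) x ord0 s *: v s) =
    \sum_(i < m.+1 | (p < i)%N) (f i i + \sum_(t < m.+1 | (p < t)%N && (t != i)) f i t).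
  apply: eq_bigr => i pi; rewrite (mZl H) (msumr H) scaler_sumr (bigD1 i) //=.
  by congr (_ + _); [|apply: eq_bigr => t _]; rewrite (mZr H) scalerA.
rewrite big_split /=.
set O := \sum_(i < m.+1 | _) \sum_(t < m.+1 | _) f i t.
have O0 : O = 0.
  have : O = - O.
    rewrite {1}/O (exchange_big_dep (fun t : 'I_m.+1 => (p < t)%N)) /=; last first.
      by move=> i j _ /andP[->].
    rewrite /O -sumrN; apply: eq_bigr => t pt.
    rewrite -sumrN; apply: eq_big => [s|s /andP[ps /andP[_ ts]]].
      by rewrite pt /= eq_sym.
    rewrite /f (basis_anticomm Hb) ?(leq_ltn_trans (leq0n p)) //; last by rewrite eq_sym.
    by rewrite scalerN mulrC.
  move/eqP; rewrite -addr_eq0 -mulr2n -scaler_nat scaler_eq0 pnatr_eq0 /=.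
  by move/eqP.
rewrite O0 addr0 /cq scaleNr scaler_suml -sumrN; apply: eq_bigr => i pi.
rewrite /f (vsq H Hb) ?(leq_ltn_trans (leq0n p)) // scalerN expr2 //.
Qed.

Lemma powQ_even (R : realType) d (mulA : 'rV[R]_d -> _ -> _) e conj m p
  (v : 'I_m.+1 -> 'rV[R]_d)
  (H : is_alt_alg_with_anti_involution mulA e conj)
  (Hb : adapted_basis mulA e conj v) (x : 'rV[R]_m.+1) k :
  powA mulA e (xq_of p v x) (2 * k) = cq p x ^+ k *: e.
Proof.
elim: k => [|k IH]; first by rewrite muln0 expr0 scale1r.
have -> : (2 * k.+1 = (2 * k).+2)%N by rewrite mulnS.
rewrite /powA /= -/(powA mulA e (xq_of p v x) (2 * k)) IH.
by rewrite !(mZr H) (Defs.mulA1 H) (QQ p H Hb) scalerA exprSr.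
Qed.

Lemma powQ_odd (R : realType) d (mulA : 'rV[R]_d -> _ -> _) e conj m p
  (v : 'I_m.+1 -> 'rV[R]_d)
  (H : is_alt_alg_with_anti_involution mulA e conj)
  (Hb : adapted_basis mulA e conj v) (x : 'rV[R]_m.+1) k :
  powA mulA e (xq_of p v x) (2 * k).+1 = cq p x ^+ k *: xq_of p v x.
Proof.
rewrite /powA /= -/(powA mulA e (xq_of p v x) (2 * k)) (powQ_even p H Hb).
by rewrite (mZr H) (Defs.mulA1 H).
Qed.

Lemma QQw (R : realType) d (mulA : 'rV[R]_d -> _ -> _) e conj m p
  (v : 'I_m.+1 -> 'rV[R]_d)
  (H : is_alt_alg_with_anti_involution mulA e conj)
  (Hb : adapted_basis mulA e conj v) (x : 'rV[R]_m.+1) w :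
  mulA (xq_of p v x) (mulA (xq_of p v x) w) = cq p x *: w.
Proof.
have := associator_aab H (xq_of p v x) w.
rewrite /associator (QQ p H Hb) (mZl H) (Defs.mul1A H).
by move/eqP; rewrite subr_eq0 => /eqP ->.
Qed.

Lemma vQ_anti (R : realType) d (mulA : 'rV[R]_d -> _ -> _) e conj m p
  (v : 'I_m.+1 -> 'rV[R]_d)
  (H : is_alt_alg_with_anti_involution mulA e conj)
  (Hb : adapted_basis mulA e conj v) (x : 'rV[R]_m.+1) (s : 'I_m.+1) w :
  (0 < s)%N -> (s <= p)%N ->
  mulA (v s) (mulA (xq_of p v x) w) = - mulA (xq_of p v x) (mulA (v s) w).
Proof.
move=> s0 sp.
rewrite /xq_of !(msuml H) (msumr H) -sumrN; apply: eq_bigr => t pt.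
rewrite !(mZl H) (mZr H) -scalerN; congr (_ *: _).
apply: (vvw_anti H); apply: (basis_anticomm Hb) => //.
  exact: leq_ltn_trans (leq0n p) pt.
by apply/eqP => st; move: pt; rewrite -st ltnNge sp.
Qed.

Lemma Qw_sum (R : realType) d (mulA : 'rV[R]_d -> _ -> _) e conj m p
  (v : 'I_m.+1 -> 'rV[R]_d)
  (H : is_alt_alg_with_anti_involution mulA e conj) (x : 'rV[R]_m.+1) w :
  mulA (xq_of p v x) w = \sum_(t < m.+1 | (p < t)%N) x ord0 t *: mulA (v t) w.
Proof. by rewrite /xq_of (msuml H); apply: eq_bigr => t _; rewrite (mZl H). Qed.

Lemma is_derive_coord (R : realType) (V : normedModType R) a b
  (G : V -> 'M[R]_(a, b)) (x w : V) (dG : 'M[R]_(a, b)) :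
  is_derive x w G dG -> forall i j, is_derive x w (fun y => G y i j) (dG i j).
Proof.
move=> HG i j; have dG' := @ex_derive _ _ _ _ _ _ _ HG.
split; first exact: (derivable_mxP G x w).1 dG' i j.
have := derive_mx dG'; rewrite (@derive_val _ _ _ _ _ _ _ HG) => /matrixP/(_ i j).
by rewrite mxE => ->.
Qed.

Lemma is_derive_mx (R : realType) (V : normedModType R) a b
  (G : V -> 'M[R]_(a, b)) (x w : V) (dG : 'M[R]_(a, b)) :
  (forall i j, is_derive x w (fun y => G y i j) (dG i j)) -> is_derive x w G dG.
Proof.
move=> HG.
have dG' : derivable G x w.
  by apply/derivable_mxP => i j; exact: (@ex_derive _ _ _ _ _ _ _ (HG i j)).
split => //; rewrite derive_mx //; apply/matrixP => i j; rewrite mxE.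
exact: (@derive_val _ _ _ _ _ _ _ (HG i j)).
Qed.

Lemma is_deriveZf (R : realType) (V : normedModType R) d
  (phi : V -> R) (G : V -> 'rV[R]_d) (x w : V) (dphi : R) (dG : 'rV[R]_d) :
  is_derive x w phi dphi -> is_derive x w G dG ->
  is_derive x w (fun y => phi y *: G y) (phi x *: dG + dphi *: G x).
Proof.
move=> Hp HG; apply: is_derive_mx => i j.
have HGij := is_derive_coord HG i j.
have := @is_deriveM R V phi (fun y => G y i j) x w dphi (dG i j) Hp HGij.
move=> HM.
have -> : (fun y => (phi y *: G y) i j) = (phi * (fun y => G y i j))%R.
  by apply/funext => y; rewrite mxE.
rewrite !mxE /=; apply: (is_derive_eq HM); by rewrite [dphi * _]mulrC.
Qed.

Lemma is_derive_sumc (R : realType) (V W : normedModType R) n (P : pred 'I_n)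
  (f : 'I_n -> V -> W) x w (df : 'I_n -> W) :
  (forall i, P i -> is_derive x w (f i) (df i)) ->
  is_derive x w (fun y => \sum_(i < n | P i) f i y) (\sum_(i < n | P i) df i).
Proof.
move=> Hf; rewrite -fct_sumE.
elim/big_ind2 : _ => //; first exact: is_derive_cst.
by move=> f1 d1 f2 d2 H1 H2; exact: is_deriveD.
Qed.

Lemma is_derive_transfer (R : realType) (V V' W : normedModType R)
  (f : V -> W) (f' : V' -> W) a v a' v' df :
  (forall h : R, f (h *: v + a) = f' (h *: v' + a')) ->
  is_derive a' v' f' df -> is_derive a v f df.
Proof.
move=> Ef Hd.
have fa : f a = f' a' by have := Ef 0; rewrite !scale0r !add0r.
have E : (fun h : R => h^-1 *: ((f \o shift a) (h *: v) - f a)) =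
         (fun h : R => h^-1 *: ((f' \o shift a') (h *: v') - f' a')).
  by apply/funext => h /=; rewrite Ef fa.
split.
  by have := @ex_derive _ _ _ _ _ _ _ Hd; rewrite /derivable E.
by have := @derive_val _ _ _ _ _ _ _ Hd; rewrite /derive E.
Qed.

Lemma is_derive_mulAl (R : realType) d (mulA : 'rV[R]_d -> _ -> _) e conj
  (H : is_alt_alg_with_anti_involution mulA e conj) (V : normedModType R)
  (G : V -> 'rV[R]_d) (x w : V) (dG : 'rV[R]_d) a :
  is_derive x w G dG -> is_derive x w (fun y => mulA a (G y)) (mulA a dG).
Proof.
move=> HG.
have E : forall u : 'rV[R]_d, mulA a u = \sum_(i < d) u ord0 i *: mulA a (delta_mx ord0 i).
  move=> u; rewrite {1}(row_sum_delta u) (msumr H).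
  by apply: eq_bigr => i _; rewrite (mZr H).
have -> : (fun y => mulA a (G y)) =
   (fun y => \sum_(i < d | true) G y ord0 i *: mulA a (delta_mx ord0 i)).
  by apply/funext => y; rewrite E.
rewrite E; apply: is_derive_sumc => i _.
apply: is_derive_eq; first by apply: (is_deriveZf (is_derive_coord HG ord0 i)).
by rewrite /= scaler0 add0r.
Qed.

Lemma sum_deltaR (R : realType) m p (s : 'I_m.+1) (c : 'I_m.+1 -> R) :
  \sum_(t < m.+1 | (p < t)%N) c t * (delta_mx ord0 s : 'rV[R]_m.+1) ord0 t =
  if (p < s)%N then c s else 0.
Proof.
case: ifP => ps.
  rewrite (bigD1 s) //= mxE !eqxx mulr1 big1 ?addr0 // => t /andP[_ ts].
  by rewrite mxE (negbTE ts) andbF mulr0.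
rewrite big1 // => t pt; rewrite mxE.
have -> : (t == s) = false by apply/negbTE; apply/eqP => ts; rewrite -ts pt in ps.
by rewrite andbF mulr0.
Qed.

Lemma sum_deltaV (R : realType) d m p (s : 'I_m.+1) (c : 'I_m.+1 -> 'rV[R]_d) :
  \sum_(t < m.+1 | (p < t)%N) (delta_mx ord0 s : 'rV[R]_m.+1) ord0 t *: c t =
  if (p < s)%N then c s else 0.
Proof.
case: ifP => ps.
  rewrite (bigD1 s) //= mxE !eqxx scale1r big1 ?addr0 // => t /andP[_ ts].
  by rewrite mxE (negbTE ts) andbF scale0r.
rewrite big1 // => t pt; rewrite mxE.
have -> : (t == s) = false by apply/negbTE; apply/eqP => ts; rewrite -ts pt in ps.
by rewrite andbF scale0r.
Qed.

Lemma is_derive_cq (R : realType) m p (x : 'rV[R]_m.+1) (s : 'I_m.+1) :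
  is_derive x (delta_mx ord0 s) (cq p)
    (if (p < s)%N then - (2 * x ord0 s) else 0).
Proof.
have -> : cq p = (fun y : 'rV[R]_m.+1 =>
    - \sum_(t < m.+1 | (p < t)%N) (y ord0 t * y ord0 t)).
  by apply/funext => y; rewrite /cq; congr (- _); apply: eq_bigr => t _; rewrite expr2.
have Hc : forall t : 'I_m.+1,
    is_derive x (delta_mx ord0 s) (fun y : 'rV[R]_m.+1 => y ord0 t)
      ((delta_mx ord0 s : 'rV[R]_m.+1) ord0 t).
  move=> t; exact: (is_derive_coord (is_derive_id x (delta_mx ord0 s)) ord0 t).
have Hs := is_derive_sumc (P := fun t : 'I_m.+1 => (p < t)%N)
  (f := fun t (y : 'rV[R]_m.+1) => y ord0 t * y ord0 t)
  (fun t _ => is_deriveM (Hc t) (Hc t)).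
have := is_deriveN Hs; rewrite opprfctE => HN.
apply: (is_derive_eq HN).
rewrite (eq_bigr (fun t => (2 * x ord0 t) * (delta_mx ord0 s : 'rV[R]_m.+1) ord0 t)).
  by rewrite sum_deltaR; case: ifP; rewrite ?oppr0.
by move=> t _ /=; rewrite -mulrA mulr_natl mulr2n.
Qed.

Lemma xp_shift_in (R : realType) m p (i : 'I_p.+1) (h : R) (x : 'rV[R]_m.+1) :
  (p < m)%N ->
  xp_of p (h *: delta_mx ord0 (inord i : 'I_m.+1) + x) =
  h *: delta_mx ord0 i + xp_of p x.
Proof.
move=> pm; apply/rowP => j; rewrite !mxE.
have jm : (j < m.+1)%N by apply: leq_trans (ltn_ord j) _; rewrite ltnS ltnW.
have im : (i < m.+1)%N by apply: leq_trans (ltn_ord i) _; rewrite ltnS ltnW.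
have -> : (inord j == inord i :> 'I_m.+1) = (j == i) by rewrite -val_eqE /= !inordK // val_eqE.
by [].
Qed.

Lemma xp_shift_out (R : realType) m p (s : 'I_m.+1) (h : R) (x : 'rV[R]_m.+1) :
  (p < s)%N -> xp_of p (h *: delta_mx ord0 s + x) = xp_of p x.
Proof.
move=> ps; apply/rowP => j; rewrite !mxE.
have jm : (j < m.+1)%N.
  exact: leq_trans (ltn_ord j) (leq_trans ps (ltnW (ltn_ord s))).
have -> : (inord j == s) = false.
  apply/negbTE; rewrite -(inj_eq val_inj) /= inordK //.
  by apply/eqP => js; move: ps; rewrite -js ltnNge -ltnS ltn_ord.
by rewrite andbF mulr0 add0r.
Qed.

Lemma is_derive_G_in (R : realType) d m p (g : 'rV[R]_p.+1 -> 'rV[R]_d)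
  (x : 'rV[R]_m.+1) (i : 'I_p.+1) :
  C1 g -> (p < m)%N ->
  is_derive x (delta_mx ord0 (inord i : 'I_m.+1)) (fun y => g (xp_of p y))
    (partial g i (xp_of p x)).
Proof.
move=> [Hg _] pm.
apply: (is_derive_transfer (f' := g) (a' := xp_of p x) (v' := delta_mx ord0 i)).
  by move=> h; rewrite xp_shift_in.
exact: derivableP (Hg i (xp_of p x)).
Qed.

Lemma is_derive_G_out (R : realType) d m p (g : 'rV[R]_p.+1 -> 'rV[R]_d)
  (x : 'rV[R]_m.+1) (s : 'I_m.+1) :
  (p < s)%N ->
  is_derive x (delta_mx ord0 s) (fun y => g (xp_of p y)) 0.
Proof.
move=> ps.
apply: (is_derive_transfer (f' := cst (g (xp_of p x))) (a' := x) (v' := delta_mx ord0 s)).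
  by move=> h; rewrite xp_shift_out.
Qed.

Lemma is_derive_powZ (R : realType) (V : normedModType R) d
  (phi : V -> R) (G : V -> 'rV[R]_d) (x w : V) (dphi : R) (dG : 'rV[R]_d) k :
  is_derive x w phi dphi -> is_derive x w G dG ->
  is_derive x w (fun y => phi y ^+ k *: G y)
    (phi x ^+ k *: dG + (k%:R * phi x ^+ k.-1 * dphi) *: G x).
Proof.
move=> Hp HG.
have HX := @is_deriveX R V phi k x w dphi Hp; rewrite exprfctE in HX.
exact: (is_deriveZf HX HG).
Qed.

Lemma is_derive_QG (R : realType) d (mulA : 'rV[R]_d -> _ -> _) e conj m p
  (v : 'I_m.+1 -> 'rV[R]_d)
  (H : is_alt_alg_with_anti_involution mulA e conj)
  (G : 'rV[R]_m.+1 -> 'rV[R]_d) (x : 'rV[R]_m.+1) (s : 'I_m.+1) dG :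
  is_derive x (delta_mx ord0 s) G dG ->
  is_derive x (delta_mx ord0 s) (fun y => mulA (xq_of p v y) (G y))
    (mulA (xq_of p v x) dG + (if (p < s)%N then mulA (v s) (G x) else 0)).
Proof.
move=> HG.
have -> : (fun y => mulA (xq_of p v y) (G y)) =
    (fun y => \sum_(t < m.+1 | (p < t)%N) y ord0 t *: mulA (v t) (G y)).
  by apply/funext => y; rewrite (Qw_sum p v H).
apply: is_derive_eq.
  apply: is_derive_sumc => t _.
  apply: (is_deriveZf (is_derive_coord (is_derive_id x (delta_mx ord0 s)) ord0 t)).
  exact: (is_derive_mulAl H (v t) HG).
by rewrite big_split /= -(Qw_sum p v H) (sum_deltaV p s (fun t => mulA (v t) (G x))).
Qed.

Unset Implicit Arguments. Set Strict Implicit.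

Lemma sum_reindex (V : zmodType) m p (F : 'I_m.+1 -> V) : (p < m)%N ->
  \sum_(s < m.+1 | (s <= p)%N) F s = \sum_(i < p.+1) F (inord i).
Proof.
move=> pm; have le : (p.+1 <= m.+1)%N by rewrite ltnS ltnW.
rewrite (eq_bigl (fun s : 'I_m.+1 => true && (s < p.+1)%N)) //.
rewrite (big_ord_narrow_cond le) /=; apply: eq_bigr => i _; congr F.
by apply: val_inj; rewrite /= inordK // (leq_trans (ltn_ord i)).
Qed.

Lemma sum_count (V : zmodType) m p (a : V) :
  \sum_(s < m.+1 | (p < s)%N) a = a *+ (m - p).
Proof.
rewrite -(big_geq_mkord p.+1 m.+1 xpredT (fun _ => a)) sumr_const_nat.
by rewrite subSS.
Qed.

Theorem lemma3p8 (R : realType) (d m p : nat)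
    (mulA : 'rV[R]_d -> 'rV[R]_d -> 'rV[R]_d) (e : 'rV[R]_d)
    (conj : 'rV[R]_d -> 'rV[R]_d) (v : 'I_m.+1 -> 'rV[R]_d)
    (g : 'rV[R]_p.+1 -> 'rV[R]_d) (k : nat) :
  (1 < d)%N ->
  is_alt_alg_with_anti_involution mulA e conj ->
  adapted_basis mulA e conj v ->
  (p < m)%N ->
  C1 g ->
  forall x : 'rV[R]_m.+1,
    [/\ D_xp mulA p v (fun y => mulA (powA mulA e (xq_of p v y) (2 * k)) (g (xp_of p y))) x
          = mulA (powA mulA e (xq_of p v x) (2 * k)) (D_xp_g mulA v g (xp_of p x)),
        D_xp mulA p v (fun y => mulA (powA mulA e (xq_of p v y) (2 * k).+1) (g (xp_of p y))) x
          = mulA (powA mulA e (xq_of p v x) (2 * k).+1) (Dbar_xp_g mulA v g (xp_of p x)),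
        D_xq mulA p v (fun y => mulA (powA mulA e (xq_of p v y) (2 * k)) (g (xp_of p y))) x
          = (- (2 * k)%:R) *: mulA (powA mulA e (xq_of p v x) (2 * k).-1) (g (xp_of p x))
      & D_xq mulA p v (fun y => mulA (powA mulA e (xq_of p v y) (2 * k).+1) (g (xp_of p y))) x
          = (- (2 * k + (m - p))%:R) *: mulA (powA mulA e (xq_of p v x) (2 * k)) (g (xp_of p x))].
Proof.
move=> _ H Hb pm Hg x.
have Fe : (fun y => mulA (powA mulA e (xq_of p v y) (2 * k)) (g (xp_of p y))) =
          (fun y => cq p y ^+ k *: g (xp_of p y)).
  by apply/funext => y; rewrite (powQ_even p H Hb) (mZl H) (Defs.mul1A H).
have Fo : (fun y => mulA (powA mulA e (xq_of p v y) (2 * k).+1) (g (xp_of p y))) =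
          (fun y => cq p y ^+ k *: mulA (xq_of p v y) (g (xp_of p y))).
  by apply/funext => y; rewrite (powQ_odd p H Hb) (mZl H).
rewrite Fe Fo.
set c := cq p x.
have im : forall i : 'I_p.+1, (i < m.+1)%N.
  by move=> i; apply: leq_trans (ltn_ord i) _; rewrite ltnS ltnW.
have ltp : forall i : 'I_p.+1, (p < (inord i : 'I_m.+1))%N = false.
  by move=> i; rewrite inordK // ltnNge -ltnS ltn_ord.
have dFe_in : forall i : 'I_p.+1,
    partial (fun y => cq p y ^+ k *: g (xp_of p y)) (inord i) x =
    c ^+ k *: partial g i (xp_of p x).
  move=> i.
  have Hd := is_derive_powZ k (is_derive_cq p x (inord i)) (is_derive_G_in x i Hg pm).
  by rewrite /partial (@derive_val _ _ _ _ _ _ _ Hd) ltp mulr0 scale0r addr0.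
have dFo_in : forall i : 'I_p.+1,
    partial (fun y => cq p y ^+ k *: mulA (xq_of p v y) (g (xp_of p y))) (inord i) x =
    c ^+ k *: mulA (xq_of p v x) (partial g i (xp_of p x)).
  move=> i.
  have Hd := is_derive_powZ k (is_derive_cq p x (inord i))
     (is_derive_QG p v H (is_derive_G_in x i Hg pm)).
  by rewrite /partial (@derive_val _ _ _ _ _ _ _ Hd) ltp mulr0 scale0r !addr0.
have dFe_out : forall s : 'I_m.+1, (p < s)%N ->
    partial (fun y => cq p y ^+ k *: g (xp_of p y)) s x =
    (k%:R * c ^+ k.-1 * - (2 * x ord0 s)) *: g (xp_of p x).
  move=> s ps.
  have Hd := is_derive_powZ k (is_derive_cq p x s) (is_derive_G_out g x ps).
  by rewrite /partial (@derive_val _ _ _ _ _ _ _ Hd) ps scaler0 add0r.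
have dFo_out : forall s : 'I_m.+1, (p < s)%N ->
    partial (fun y => cq p y ^+ k *: mulA (xq_of p v y) (g (xp_of p y))) s x =
    c ^+ k *: mulA (v s) (g (xp_of p x)) +
    (k%:R * c ^+ k.-1 * - (2 * x ord0 s)) *: mulA (xq_of p v x) (g (xp_of p x)).
  move=> s ps.
  have Hd := is_derive_powZ k (is_derive_cq p x s)
     (is_derive_QG p v H (is_derive_G_out g x ps)).
  by rewrite /partial (@derive_val _ _ _ _ _ _ _ Hd) ps (m0r H) add0r.
have v0 : v (inord (@ord0 p)) = e.
  by rewrite (_ : inord _ = ord0) ?(basis_v0 Hb) //; apply: val_inj; rewrite /= inordK.
split.
- rewrite /D_xp sum_reindex // (powQ_even p H Hb) (mZl H) (Defs.mul1A H).
  rewrite /D_xp_g scaler_sumr; apply: eq_bigr => i _.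
  by rewrite dFe_in (mZr H).
- rewrite /D_xp sum_reindex // (powQ_odd p H Hb) (mZl H) /Dbar_xp_g.
  rewrite (mADr H) (mNr H) (msumr H) big_ord_recl [in RHS]big_mkcond.
  rewrite [in RHS]big_ord_recl /= add0r scalerBr scaler_sumr -sumrN.
  congr (_ + _); first by rewrite (dFo_in ord0) v0 (Defs.mul1A H).
  apply: eq_bigr => i _.
  have bi : (bump 0 i < m.+1)%N.
    by rewrite /bump /= add1n ltnS; apply: leq_trans (ltn_ord i) (ltnW pm).
  rewrite (dFo_in (lift ord0 i)) (mZr H) (vQ_anti H Hb) ?scalerN //.
    by rewrite inordK.
  by rewrite inordK // /bump /= add1n ltn_ord.
- rewrite /D_xq.
  rewrite (eq_bigr (fun s => (- (2 * k)%:R * c ^+ k.-1 * x ord0 s) *: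
                              mulA (v s) (g (xp_of p x)))); last first.
    by move=> s ps; rewrite dFe_out // (mZr H); congr (_ *: _); rewrite natrM; ring.
  under eq_bigr do rewrite -scalerA.
  rewrite -scaler_sumr -(Qw_sum p v H).
  case: k {Fe Fo dFe_in dFo_in dFe_out dFo_out} => [|k].
    by rewrite muln0 mulr0n oppr0 !mul0r !scale0r.
  have -> : (2 * k.+1).-1 = (2 * k).+1 by rewrite mulnS.
  by rewrite (powQ_odd p H Hb) (mZl H) -/c scalerA.
- rewrite /D_xq.
  rewrite (eq_bigr (fun s => - (c ^+ k *: g (xp_of p x)) +
       (- (2 * k)%:R * c ^+ k.-1 * x ord0 s) *:
          mulA (v s) (mulA (xq_of p v x) (g (xp_of p x))))); last first.
    move=> s ps; rewrite dFo_out // (mADr H) !(mZr H) (vvw H Hb) //; last first.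
      exact: leq_ltn_trans (leq0n p) ps.
    by rewrite scalerN; congr (_ + _); congr (_ *: _); rewrite natrM; ring.
  rewrite big_split /= sum_count.
  under [X in _ + X = _]eq_bigr do rewrite -scalerA.
  rewrite -scaler_sumr -(Qw_sum p v H) (QQw p H Hb).
  rewrite (powQ_even p H Hb) (mZl H) (Defs.mul1A H) -/c.
  rewrite -scaleNr -scaler_nat !scalerA -scalerDl; congr (_ *: _).
  case: k {Fe Fo dFe_in dFo_in dFe_out dFo_out} => [|k].
    by rewrite /= !natrD !natrM; ring.
  rewrite /= exprS !natrD !natrM; ring.
Qed.
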